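(* Let $S\cdot I = (C,O,\Sigma)\cdot(T,R,W)$ be a well-formed instrumented notebook state with $n$ cells such that $T_i = \textsc{clean}$ for all $i = 1,\dots,n$. Then the notebook state $(C,O,\Sigma)$ is reproducible, i.e. there exists a store $\Sigma'$ such that the top-to-bottom execution judgment $C \Downarrow O \cdot \Sigma'$ holds.
   Context: Locations and stores. $\mathrm{Loc}$ is a set of locations (top-level variable names, and DataFrame columns $d.c$ with $d$ an immutable DataFrame address and $c$ a column name); $\mathrm{Val}$ is a set of values; a store is a map $\Sigma:\mathrm{Loc}\to\mathrm{Val}$, and $\emptyset$ denotes the empty store. Code and outputs range over unspecified sets. Cell evaluation. Standard cell evaluation is a given relation (a black box modelling the language runtime) $c;\Sigma \Downarrow o\cdot\Sigma'$: executing code $c$ in store $\Sigma$ produces output $o$ and resulting store $\Sigma'$. Instrumented cell evaluation $c;\Sigma\Downarrow o\cdot\Sigma'\cdot r\cdot w$ holds when $c;\Sigma\Downarrow o\cdot\Sigma'$, $r\subseteq\mathrm{Loc}$ is the set of locations of $\Sigma$ read during evaluation of $c$, and $w\subseteq\mathrm{Loc}$ is the set of locations where $\Sigma'$ is updated from $\Sigma$. Notation. For a sequence of sets $W = W_1,\dots,W_n$, $\bigcup W_{i..j} = W_i\cup\dots\cup W_j$ (empty if $i>j$). Notebook states. A notebook state is $(C,O,\Sigma)$ with cell codes $C = C_1,\dots,C_n$, outputs $O = O_1,\dots,O_n$, and current store $\Sigma$. An instrumentation is $(T,R,W)$ with tags $T_i\in\{\textsc{clean},\textsc{stale}\}$,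 read sets $R_i\subseteq\mathrm{Loc}$ and write sets $W_i\subseteq\mathrm{Loc}$. Top-to-bottom execution. $C\Downarrow O\cdot\Sigma'$ holds iff there are stores $\Sigma_0 = \emptyset,\Sigma_1,\dots,\Sigma_n = \Sigma'$ with $C_k;\Sigma_{k-1}\Downarrow O_k\cdot\Sigma_k$ (standard evaluation) for each $k = 1,\dots,n$. A notebook state $(C,O,\Sigma)$ is reproducible if there exists $\Sigma'$ with $C\Downarrow O\cdot\Sigma'$. Rerun consistency. $R$ and $W$ are rerun consistent for cell $i$ if: $R_i\cap W_i=\emptyset$; $R_i\subseteq\bigcup W_{1..i-1}$; $R_i\cap\bigcup W_{i+1..n}=\emptyset$; and $W_i\cap\bigcup R_{1..i-1}=\emptyset$. Well-formedness. $(C,O,\Sigma)\cdot(T,R,W)$ is well-formed if for every $i$ with $T_i=\textsc{clean}$ there exists a store $\Sigma'$ such that (1) $C_i;\Sigma\Downarrow O_i\cdot\Sigma'\cdot R_i\cdot W_i$; (2) $\Sigma$ and $\Sigma'$ agree on every location not in $\bigcup W_{i+1..n}$; (3) $R$ and $W$ are rerun consistent for $i$. *)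

(* Defs.v *)
From Stdlib Require Import Arith Lia.

Set Implicit Arguments.

(* Abstract sets of locations and values; a store is a partial map
   Loc -> option Val (None = unbound); the empty store maps everything to None. *)
Definition store (Loc Val : Type) := Loc -> option Val.
Definition empty_store {Loc Val : Type} : store Loc Val := fun _ => None.
Definition lset (Loc : Type) := Loc -> Prop.

Definition agree_on {Loc Val : Type} (A : lset Loc) (s1 s2 : store Loc Val) : Prop :=
  forall l, A l -> s1 l = s2 l.

Definition agree_off {Loc Val : Type} (A : lset Loc) (s1 s2 : store Loc Val) : Prop :=
  forall l, ~ A l -> s1 l = s2 l.

(* The fields [ieval_*] express
   what it means for r to be the set of locations read and w the set of
   locations updated. *)
Record language (Loc Val : Type) := Language {
  code : Type;
  output : Type;
  eval : code -> store Loc Val -> output -> store Loc Val -> Prop;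
  ieval : code -> store Loc Val -> output -> store Loc Val ->
          lset Loc -> lset Loc -> Prop;
  ieval_eval : forall c s o s' r w, ieval c s o s' r w -> eval c s o s';
  ieval_writes : forall c s o s' r w, ieval c s o s' r w -> agree_off w s s';
  ieval_reads : forall c s o s' r w s1, ieval c s o s' r w -> agree_on r s s1 ->
     exists s1', ieval c s1 o s1' r w /\ agree_on w s' s1' /\ agree_off w s1 s1'
}.

Arguments eval {Loc Val} l _ _ _ _.
Arguments ieval {Loc Val} l _ _ _ _ _ _.
Arguments code {Loc Val} l.
Arguments output {Loc Val} l.

Definition bigU {Loc : Type} (W : nat -> lset Loc) (i j : nat) : lset Loc :=
  fun l => exists k, i <= k <= j /\ W k l.

Inductive tag := Clean | Stale.

Section Notebook.
Context {Loc Val : Type} (L : language Loc Val).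

Definition top_down (n : nat) (C : nat -> code L) (O : nat -> output L)
  (s' : store Loc Val) : Prop :=
  exists S : nat -> store Loc Val,
    S 0 = empty_store /\ S n = s' /\
    (forall k, 1 <= k <= n -> eval L (C k) (S (k - 1)) (O k) (S k)).

Definition reproducible (n : nat) (C : nat -> code L) (O : nat -> output L)
  (s : store Loc Val) : Prop :=
  exists s', top_down n C O s'.

Definition rerun_consistent (n : nat) (R W : nat -> lset Loc) (i : nat) : Prop :=
  (forall l, R i l -> W i l -> False) /\
  (forall l, R i l -> bigU W 1 (i - 1) l) /\
  (forall l, R i l -> bigU W (i + 1) n l -> False) /\
  (forall l, W i l -> bigU R 1 (i - 1) l -> False).

Definition well_formed (n : nat) (C : nat -> code L) (O : nat -> output L)
  (s : store Loc Val) (T : nat -> tag) (R W : nat -> lset Loc) : Prop :=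
  forall i, 1 <= i <= n -> T i = Clean ->
    exists s', ieval L (C i) s (O i) s' (R i) (W i) /\
               agree_off (bigU W (i + 1) n) s s' /\
               rerun_consistent n R W i.

End Notebook.

(* Main.v *)
Require Import Defs.
From Stdlib Require Import Arith Lia Classical.

Theorem theorem2 (Loc Val : Type) (L : language Loc Val) (n : nat)
  (C : nat -> code L) (O : nat -> output L) (s : store Loc Val)
  (T : nat -> tag) (R W : nat -> lset Loc) :
  well_formed L n C O s T R W ->
  (forall i, 1 <= i <= n -> T i = Clean) ->
  reproducible L n C O s.
Proof.
  intros WF Hc.
  assert (Main : forall m, m <= n -> exists St : nat -> store Loc Val,
    St 0 = empty_store /\
    (forall k, 1 <= k <= m -> eval L (C k) (St (k - 1)) (O k) (St k)) /\
    (forall l, bigU W 1 m l -> ~ bigU W (m + 1) n l -> St m l = s l)).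
  { induction m as [|m IH]; intros Hm.
    - exists (fun _ => empty_store). split; [reflexivity|]. split.
      + intros k Hk; lia.
      + intros l [k [Hk _]] _; lia.
    - destruct (IH ltac:(lia)) as [St [H0 [Hev HI]]].
      destruct (WF (Datatypes.S m) ltac:(lia) (Hc (Datatypes.S m) ltac:(lia))) as [s' [Hie [Hoff [r1 [r2 [r3 r4]]]]]].
      assert (Hag : agree_on (R (Datatypes.S m)) s (St m)).
      { intros l Hl. symmetry. apply HI.
        - specialize (r2 l Hl). replace (Datatypes.S m - 1) with m in r2 by lia. exact r2.
        - intros [k [Hk Hw]].
          destruct (Nat.eq_dec k ((Datatypes.S m))) as [->|Hne].
          + exact (r1 l Hl Hw).
          + apply (r3 l Hl). exists k. split; [lia|exact Hw]. }
      destruct (ieval_reads L _ _ _ _ Hie Hag) as [s1' [Hie1 [Hon1 Hoff1]]].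
      exists (fun k => if k <=? m then St k else s1'). split.
      + simpl. exact H0.
      + split.
        * intros k Hk.
          destruct (Nat.eq_dec k ((Datatypes.S m))) as [->|Hne].
          -- replace (Datatypes.S m - 1) with m by lia.
             rewrite Nat.leb_refl.
             replace (Datatypes.S m <=? m) with false by (symmetry; apply Nat.leb_gt; lia).
             exact (ieval_eval L _ _ _ _ _ _ Hie1).
          -- replace (k <=? m) with true by (symmetry; apply Nat.leb_le; lia).
             replace (k - 1 <=? m) with true by (symmetry; apply Nat.leb_le; lia).
             apply Hev; lia.
        * intros l Hin Hnot.
          replace (Datatypes.S m <=? m) with false by (symmetry; apply Nat.leb_gt; lia).
          destruct (Hin) as [k [Hk Hw]].
          assert (Hdec : W ((Datatypes.S m)) l \/ ~ W ((Datatypes.S m)) l) by apply Classical_Prop.classic.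
          destruct Hdec as [HW|HnW].
          -- rewrite <- (Hon1 l HW). symmetry. apply Hoff. exact Hnot.
          -- rewrite <- (Hoff1 l HnW). apply HI.
             ++ exists k. split; [|exact Hw].
                destruct (Nat.eq_dec k ((Datatypes.S m))) as [->|Hne]; [contradiction|lia].
             ++ intros [k' [Hk' Hw']].
                destruct (Nat.eq_dec k' ((Datatypes.S m))) as [->|Hne]; [contradiction|].
                apply Hnot. exists k'. split; [lia|exact Hw']. }
  destruct (Main n (le_n n)) as [St [H0 [Hev _]]].
  exists (St n). exists St. auto.
Qed.
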